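(* Let $\xi$ be a DoS sequence that is not an edge case, let $\mathscr{L}$ be a symmetric irreducible graph Laplacian with largest eigenvalue $\lambda_N(\mathscr{L})$, and let $t_1=0$, $t_{k+1}=t_k+\Delta_k$, where $\Delta_k=\Delta_0$ if $t_k\in[0,h_1+\tau_1)$, with $\Delta_0>0$ satisfying $\lvert1-\Delta_0\lambda_N(\mathscr{L})\rvert<1$, and $\Delta_k=\min\{\Delta_0,\ (1-\hat B_d(h_n+\tau_n))/(\gamma_1\hat B_f(h_n))\}$ if $t_k\in[h_n+\tau_n,h_{n+1}+\tau_{n+1})$, $n\in\mathbb{N}_+$, with $\gamma_1>1$ and $\hat B_d,\hat B_f$ generated by the DoS estimator. Then there exist a finite $\check t\geqslant 0$, constants $\underline{\Delta}$ and $\bar\Delta$, a duration-bound $B_d$ and a frequency-bound $B_f$ of $\xi$ such that $0<\underline{\Delta}\leqslant\Delta_k<+\infty$ for all $t_k\geqslant 0$, $\Delta_k\leqslant\bar\Delta$ for all $t_k\geqslant\check t$, $\lvert1-\bar\Delta\lambda_N(\mathscr{L})\rvert<1$, and $B_d+B_f\bar\Delta<1$.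
   Context: A DoS sequence $\xi=\{H_n\}$ is a finite or infinite sequence of sets $H_n := \{h_n\}\cup[h_n,h_n+\tau_n)$, where $h_1\geqslant 0$, $\tau_n\geqslant 0$ and $h_{n+1} > h_n+\tau_n$ for all $n$. If $\xi$ has only $m$ elements, the convention $h_{n}=h_{n}+\tau_{n}=+\infty$ for $n>m$ is used. For $0\leqslant \tau\leqslant s$ let $\Xi(\tau,s) := \bigcup_n H_n\cap[\tau,s]$ and $n_\xi(\tau,s) := \operatorname{card}(\{h_n\}_n\cap[\tau,s])$; $\lvert\cdot\rvert$ is Lebesgue measure. A constant $B_d\in[0,1]$ is a duration-bound of $\xi$ if there is $0<\kappa<+\infty$ with $\lvert \Xi(0,t)\rvert\leqslant \kappa + B_d t$ for all $t\geqslant 0$. A constant $B_f\in[0,+\infty)$ is a frequency-bound of $\xi$ if there is an integer $0<\Lambda<+\infty$ with $n_\xi(0,t)\leqslant \Lambda + B_f t$ for all $t\geqslant 0$; if no such finite $B_f$ exists, the frequency-bound is $+\infty$. $\mathcal{D}(\xi)$, $\mathcal{F}(\xi)$ are the sets of duration- and frequency-bounds. $\xi$ is an edge case if (i) $\inf\mathcal{D}(\xi)=1$, or (ii) $\inf\mathcal{F}(\xi)=+\infty$, or (iii) for every $\Gamma>0$ there is $n$ with $\tau_n>\Gamma$. DoS estimator (parameters $2\leqslant\ell\in\mathbb{N}_+$, $0<\epsilon_0<1$, $0<\theta<1$): with $B_d(i) := \frac{\lvert \Xi(0,h_i+\tau_i)\rvert}{h_i+\tau_i}$ and $B_f(i)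 := \frac{i}{h_i}$, $\hat B_d(t) = \epsilon_0$ for $t\in[0,h_\ell+\tau_\ell)$, $\hat B_d(t) = \max_{\ell\leqslant i\leqslant n}\{\epsilon_0,\ \theta B_d(i)+(1-\theta)\}$ for $t\in[h_n+\tau_n, h_{n+1}+\tau_{n+1})$, $n\geqslant \ell$; $\hat B_f(t) = \epsilon_0$ for $t\in[0,h_\ell)$, $\hat B_f(t) = \max_{\ell\leqslant i\leqslant n}\{\epsilon_0,\ B_f(i)/\theta\}$ for $t\in[h_n,h_{n+1})$, $n\geqslant\ell$. *)

(* Defs.v *)
From HB Require Import structures.
From mathcomp Require Import all_boot all_order all_algebra.
From mathcomp Require Import all_classical all_reals all_analysis.
Set Implicit Arguments. Unset Strict Implicit. Unset Printing Implicit Defensive.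
Import Order.TTheory GRing.Theory Num.Theory.
Local Open Scope classical_set_scope.
Local Open Scope ring_scope.

Section DoS.
Variable R : realType.

(* A DoS sequence is given by its length m (None = infinite, Some k = k
   elements) and real sequences h, tau, indexed from 1 (index 0 unused). *)
Definition indom (m : option nat) (n : nat) : bool :=
  (1 <= n)%N && (if m is Some k then (n <= k)%N else true).

Definition endE (m : option nat) (h tau : nat -> R) (n : nat) : \bar R :=
  if indom m n then (h n + tau n)%:E else +oo%E.

Definition DoS_seq (m : option nat) (h tau : nat -> R) : Prop :=
  (indom m 1 -> 0 <= h 1%N) /\
  (forall n, indom m n -> 0 <= tau n) /\
  (forall n, indom m n -> indom m n.+1 -> h n + tau n < h n.+1).

Definition Hset (h tau : nat -> R) (n : nat) : set R :=
  [set h n] `|` [set x | h n <= x < h n + tau n].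

Definition Xi (m : option nat) (h tau : nat -> R) (a s : R) : set R :=
  [set x | exists n, indom m n /\ Hset h tau n x] `&` [set x | a <= x <= s].

Definition muXi (m : option nat) (h tau : nat -> R) (a s : R) : \bar R :=
  (@lebesgue_measure R) (Xi m h tau a s).

Definition nxi (m : option nat) (h : nat -> R) (a s : R) : \bar R :=
  \esum_(x in [set h n | n in [set n | indom m n]] `&` [set x | (a <= x <= s)%R])
     (1%E : \bar R).

Definition durBound (m : option nat) (h tau : nat -> R) (Bd : R) : Prop :=
  0 <= Bd <= 1 /\
  exists kappa : R, 0 < kappa /\
    forall t : R, 0 <= t -> (muXi m h tau 0 t <= (kappa + Bd * t)%:E)%E.

Definition freqBound (m : option nat) (h : nat -> R) (Bf : R) : Prop :=
  0 <= Bf /\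
  exists Lambda : nat, (0 < Lambda)%N /\
    forall t : R, 0 <= t -> (nxi m h 0 t <= (Lambda%:R + Bf * t)%:E)%E.

Definition durBounds (m : option nat) (h tau : nat -> R) : set R :=
  [set Bd | durBound m h tau Bd].

Definition freqBounds (m : option nat) (h : nat -> R) : set (\bar R) :=
  [set x | (exists Bf, x = Bf%:E /\ freqBound m h Bf) \/
           (x = +oo%E /\ ~ (exists Bf, freqBound m h Bf))].

Definition edge_case (m : option nat) (h tau : nat -> R) : Prop :=
  inf (durBounds m h tau) = 1 \/
  ereal_inf (freqBounds m h) = +oo%E \/
  (forall Gamma : R, 0 < Gamma -> exists n, indom m n /\ Gamma < tau n).

Definition Bd_i (m : option nat) (h tau : nat -> R) (i : nat) : R :=
  fine (muXi m h tau 0 (h i + tau i)) / (h i + tau i).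

Definition Bf_i (h : nat -> R) (i : nat) : R := i%:R / h i.

(* \hat B_d(t) = eps0 on [0, h_l + tau_l), and
   max_{l <= i <= n} {eps0, theta B_d(i) + (1 - theta)} on
   [h_n + tau_n, h_{n+1} + tau_{n+1}); since h_i + tau_i is increasing, the
   indices l <= i <= n are exactly those with h_i + tau_i <= t. *)
Definition Bdhat (m : option nat) (h tau : nat -> R) (ell : nat) (eps0 theta : R)
  (t : R) : R :=
  sup ([set eps0] `|`
       [set theta * Bd_i m h tau i + (1 - theta) | i in
          [set i | (ell <= i)%N /\ indom m i /\ h i + tau i <= t]]).

Definition Bfhat (m : option nat) (h : nat -> R) (ell : nat) (eps0 theta : R)
  (t : R) : R :=
  sup ([set eps0] `|`
       [set Bf_i h i / theta | i in
          [set i | (ell <= i)%N /\ indom m i /\ h i <= t]]).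

Definition graph_laplacian (N : nat) (L : 'M[R]_N) : Prop :=
  (forall i j, i != j -> L i j <= 0) /\ (forall i, \sum_j L i j = 0).

Definition symmetric_mx (N : nat) (L : 'M[R]_N) : Prop := L^T = L.

(* irreducible: the directed graph of nonzero entries is strongly connected *)
Definition irreducible_mx (N : nat) (L : 'M[R]_N) : Prop :=
  forall i j, connect (fun a b => L a b != 0) i j.

Definition largest_eigenvalue (N : nat) (L : 'M[R]_N) (lam : R) : Prop :=
  eigenvalue L lam /\ (forall a, eigenvalue L a -> a <= lam).

End DoS.

(* Main.v *)
Require Import Defs.
From HB Require Import structures.
From mathcomp Require Import all_boot all_order all_algebra.
From mathcomp Require Import all_classical all_reals all_analysis.
From mathcomp Require Import ring lra.
Import Order.TTheory GRing.Theory Num.Theory.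
Local Open Scope classical_set_scope.
Local Open Scope ring_scope.

Lemma sum1_ord (R : realType) M : (\sum_(i \in `I_M) (1%E : \bar R) = M%:R%:E)%E.
Proof.
rewrite -fsbig_ord sumEFin; congr (_%:E).
by rewrite sumr_const card_ord.
Qed.

Lemma esum_le_card (R : realType) (P : set nat) M : P `<=` `I_M ->
  (\esum_(i in P) (1%E : \bar R) <= M%:R%:E)%E.
Proof.
move=> PM; apply: ge_ereal_sup => _ [X [finX XP] <-].
rewrite -sum1_ord; apply: lee_fsum_nneg_subset.
- exact: finX.
- exact: finite_II.
- by apply/subsetP => x /XP /PM.
- by [].

Qed.

Lemma esum_ge_card (R : realType) (P : set nat) j :
  (forall n, (1 <= n <= j)%N -> P n) ->
  (j%:R%:E <= \esum_(i in P) (1%E : \bar R))%E.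
Proof.
move=> HP; apply: esum_ge; exists (succn @` `I_j).
  split; first exact/finite_image/finite_II.
  by move=> _ [n /= nj <-]; apply: HP.
rewrite fsbig_image ?sum1_ord //.
by move=> x y _ _ [].
Qed.
Section Basic.
Context {R : realType} {m : option nat} {h tau : nat -> R}.
Hypothesis HD : DoS_seq m h tau.

Local Notation dom := (indom m).
Local Notation e := (fun n => h n + tau n).

Lemma dom_le {n k} : dom n -> (1 <= k <= n)%N -> dom k.
Proof.
rewrite /indom; case: m => [j|] /andP[_ H] /andP[-> Hk] //=.
exact: leq_trans Hk H.
Qed.

Lemma dom_ge1 {n} : dom n -> (1 <= n)%N.
Proof. by case/andP. Qed.

Lemma h_le_e {n} : dom n -> h n <= e n.
Proof. by case: HD => _ [Ht _] /Ht; rewrite lerDl. Qed.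

Lemma e_lt_h {i j} : dom j -> (1 <= i)%N -> (i < j)%N -> e i < h j.
Proof.
case: HD => _ [_ Hs].
elim: j => [//|j IH] dj i1 ij.
have dj' : dom j by apply: (dom_le dj); rewrite (leq_trans i1) //= -ltnS.
have := Hs j dj' dj.
rewrite ltnS leq_eqVlt in ij; case/orP: ij => [/eqP -> //|ij] Hj.
apply: lt_trans (IH dj' i1 ij) _.
apply: le_lt_trans Hj; exact: h_le_e.
Qed.

Lemma h_lt {i j} : dom j -> (1 <= i)%N -> (i < j)%N -> h i < h j.
Proof.
move=> dj i1 ij; apply: le_lt_trans (e_lt_h dj i1 ij).
apply: h_le_e; apply: (dom_le dj); rewrite i1 ltnW //.
Qed.

Lemma h_le {i j} : dom j -> (1 <= i <= j)%N -> h i <= h j.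
Proof.
move=> dj /andP[i1]; rewrite leq_eqVlt => /orP[/eqP -> //|ij].
exact/ltW/h_lt.
Qed.

Lemma e_le {i j} : dom j -> (1 <= i <= j)%N -> e i <= e j.
Proof.
move=> dj /andP[i1]; rewrite leq_eqVlt => /orP[/eqP -> //|ij].
apply/ltW/(lt_le_trans (e_lt_h dj i1 ij)); exact: h_le_e.
Qed.

Lemma h_ge0 {n} : dom n -> 0 <= h n.
Proof.
move=> dn; case: HD => H1 _.
have d1 : dom 1 by apply: (dom_le dn); by rewrite leqnn (dom_ge1 dn).
apply: le_trans (H1 d1) _; apply: (h_le dn); by rewrite leqnn (dom_ge1 dn).
Qed.

Lemma h_gt0 {n} : dom n -> (2 <= n)%N -> 0 < h n.
Proof.
move=> dn n2.
have d1 : dom 1 by apply: (dom_le dn); by rewrite leqnn (dom_ge1 dn).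
apply: le_lt_trans (h_ge0 d1) _; exact: h_lt.
Qed.

Lemma e_ge0 {n} : dom n -> 0 <= e n.
Proof. by move=> dn; apply: le_trans (h_ge0 dn) (h_le_e dn). Qed.

Lemma h_inj {i j} : dom i -> dom j -> h i = h j -> i = j.
Proof.
move=> di dj hij; case: (ltngtP i j) => // ij.
  by have := h_lt dj (dom_ge1 di) ij; rewrite hij ltxx.
by have := h_lt di (dom_ge1 dj) ij; rewrite hij ltxx.
Qed.
Lemma nxi_eq t : nxi m h 0 t = \esum_(n in [set n | dom n /\ h n <= t]) (1%E : \bar R).
Proof.
rewrite /nxi.
have -> : [set h n | n in [set n | dom n]] `&` [set x | 0 <= x <= t] =
    h @` [set n | dom n /\ h n <= t].
  apply/seteqP; split => x.
    by move=> [[n dn <-] /andP[_ hx]]; exists n.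
  move=> [n [dn hn] <-]; split; first by exists n.
  by apply/andP; split; [exact: h_ge0|].
rewrite esum_image //.
by move=> i j; rewrite !inE => -[di _] [dj _]; exact: h_inj.
Qed.

Lemma n_le_nxi n : dom n -> (n%:R%:E <= nxi m h 0 (h n))%E.
Proof.
move=> dn; rewrite nxi_eq; apply: esum_ge_card => k /andP[k1 kn].
split; first by apply: (dom_le dn); rewrite k1.
by apply: (h_le dn); rewrite k1.
Qed.

Lemma freq_lemma ell F : 0 <= F ->
  (forall i, dom i -> (ell <= i)%N -> i%:R <= F * h i) -> freqBound m h F.
Proof.
move=> F0 HF; split => //; exists ell.+1; split => // t t0.
have Ft0 : 0 <= F * t by rewrite mulr_ge0.
rewrite nxi_eq; apply: le_trans (@esum_le_card R _ (ell + Num.truncn (F*t)).+1 _) _.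
  move=> n [dn hn] /=; case: (ltnP n ell) => [nl|ln].
    by rewrite ltnS (leq_trans (ltnW nl)) ?leq_addr.
  have : n%:R <= F * t by apply: le_trans (HF _ dn ln) _; rewrite ler_wpM2l.
  by rewrite -Num.Theory.truncn_ge_nat // => H; rewrite ltnS (leq_trans H) // leq_addl.
rewrite lee_fin -addSn natrD lerD2l.
by have := Num.Theory.truncn_le (F*t); rewrite Ft0.
Qed.

Lemma Xi_meas a s : measurable (Xi m h tau a s).
Proof.
rewrite /Xi; apply: measurableI; last first.
  have -> : [set x | a <= x <= s] = `[a, s]%classic.
    by apply/seteqP; split => x /=; rewrite in_itv.
  exact: measurable_itv.
have -> : [set x | exists n, dom n /\ Hset h tau n x] =
   \bigcup_(n in [set n | dom n]) Hset h tau n.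
  by apply/seteqP; split => x [n]; [move=> [dn Hx]; exists n | move=> dn Hx; exists n].
apply: bigcup_measurable => n _; rewrite /Hset; apply: measurableU.
  exact: measurable_set1.
have -> : [set x | h n <= x < h n + tau n] = `[h n, h n + tau n[%classic.
  by apply/seteqP; split => x /=; rewrite in_itv.
exact: measurable_itv.
Qed.

Lemma mu_le_itv (A : set R) a b : measurable A -> A `<=` `[a, b]%classic -> a <= b ->
  ((@lebesgue_measure R) A <= (b - a)%:E)%E.
Proof.
move=> mA Ab ab.
have H : ((@lebesgue_measure R) A <= (@lebesgue_measure R) `[a, b]%classic)%E.
  by apply: le_measure; rewrite ?inE //; exact: measurable_itv.
apply: le_trans H _.
rewrite lebesgue_measure_itv /= lte_fin; case: ltP => // _.
by rewrite lee_fin subr_ge0.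
Qed.

Lemma muXi_le {s} : 0 <= s -> (muXi m h tau 0 s <= s%:E)%E.
Proof.
move=> s0; have := @mu_le_itv (Xi m h tau 0 s) 0 s (Xi_meas 0 s).
rewrite subr0; apply => //.
by move=> x [_ /andP[x0 xs]]; rewrite /= in_itv /= x0.
Qed.

Lemma muXi_ge0 s : (0 <= muXi m h tau 0 s)%E.
Proof. exact: measure_ge0. Qed.

Lemma muXi_fin {s} : 0 <= s -> muXi m h tau 0 s = (fine (muXi m h tau 0 s))%:E.
Proof.
move=> s0; have H : muXi m h tau 0 s \is a fin_num.
  rewrite ge0_fin_numE ?muXi_ge0 //.
  by apply: le_lt_trans (muXi_le s0) _; rewrite ltry.
exact/esym/fineK.
Qed.

Lemma Xi_mono {s s'} : s <= s' -> Xi m h tau 0 s `<=` Xi m h tau 0 s'.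
Proof.
by move=> ss' x [Hx /andP[x0 xs]]; split => //; rewrite /= x0 (le_trans xs).
Qed.

Lemma muXi_mono {s s'} : s <= s' -> (muXi m h tau 0 s <= muXi m h tau 0 s')%E.
Proof.
move=> ss'; apply: le_measure; rewrite ?inE; try exact: Xi_meas.
exact: Xi_mono.
Qed.

Lemma Hset_le {n x} : dom n -> Hset h tau n x -> h n <= x /\ x <= e n.
Proof.
move=> dn [-> | /andP[hx xe]]; first by split => //; exact: h_le_e.
by split => //; exact: ltW.
Qed.

Lemma mu_itv_oo a b : a < b ->
  (@lebesgue_measure R) `]a, b[%classic = (b - a)%:E.
Proof. by move=> ab; rewrite lebesgue_measure_itv /= lte_fin ab EFinB. Qed.

Lemma mu_itv_cc a b : a <= b ->
  (@lebesgue_measure R) `[a, b]%classic = (b - a)%:E.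
Proof.
move=> ab; rewrite lebesgue_measure_itv /= lte_fin.
case: ltP => [_|ba]; first by rewrite EFinB.
have -> : b = a by apply/eqP; rewrite eq_le ab ba.
by rewrite subrr.
Qed.

Lemma gap_lemma i : dom i -> (2 <= i)%N ->
  (muXi m h tau 0 (e i) <= (e i - (h 2 - e 1))%:E)%E.
Proof.
move=> di i2.
have d1 : dom 1 by apply: (dom_le di); rewrite (leq_trans _ i2).
have d2 : dom 2 by apply: (dom_le di); rewrite i2.
have sub : Xi m h tau 0 (e i) `<=` `[0, e 1]%classic `|` `[h 2, e i]%classic.
  move=> x [[n [dn Hx]] /andP[x0 xe]]; have [hx xen] := Hset_le dn Hx.
  case: (ltnP 1 n) => n1.
    right; rewrite /= in_itv /= xe andbT; apply: le_trans hx.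
    by apply: (h_le dn); rewrite n1.
  left; rewrite /= in_itv /= x0 /=.
  have n1' : (n = 1)%N by apply/eqP; rewrite eqn_leq n1 (dom_ge1 dn).
  by rewrite n1' in xen.
have H : (muXi m h tau 0 (e i) <=
   (@lebesgue_measure R) (`[0%R, e 1%N]%classic `|` `[h 2%N, e i]%classic))%E.
  apply: le_measure; rewrite ?inE //; first exact: Xi_meas.
  by apply: measurableU; exact: measurable_itv.
apply: le_trans H _.
have := measureU2 (@lebesgue_measure R) (measurable_itv `[0%R, e 1%N]) (measurable_itv `[h 2%N, e i]).
move/le_trans; apply.
rewrite /= mu_itv_cc ?e_ge0 // mu_itv_cc.
  by rewrite -EFinD lee_fin; lra.
by apply: le_trans (h_le_e di); apply: (h_le di); rewrite i2.
Qed.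

Lemma dur_lemma ell S G0 G1 : 0 <= S <= 1 -> 0 <= G1 ->
  (forall i, dom i -> (ell <= i)%N -> (muXi m h tau 0 (e i) <= (S * e i)%:E)%E) ->
  (forall i, dom i -> i%:R <= G0 + G1 * h i) ->
  durBound m h tau S.
Proof.
move=> /andP[S0 S1] G10 HS HG; split; first by rewrite S0 S1.
set C := \sum_(n < ell) `|e n|.
have C0 : 0 <= C by apply: sumr_ge0.
exists (C + 1); split; first lra.
move=> t t0.
case: (pselect (exists i, [&& dom i, (ell <= i)%N & h i <= t])) => [ex|nex].
- have ub : forall i, [&& dom i, (ell <= i)%N & h i <= t] ->
      (i <= Num.truncn (G0 + G1 * t))%N.
    move=> i /and3P[di _ hi].
    have Hi : i%:R <= G0 + G1 * t.
      by apply: le_trans (HG _ di) _; rewrite lerD2l ler_wpM2l.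
    have x0 : 0 <= G0 + G1 * t := le_trans (ler0n _ _) Hi.
    by rewrite Num.Theory.truncn_ge_nat.
  case: (ex_maxnP ex ub) => j /and3P[dj lj hj] jmax.
  have ej0 := e_ge0 dj.
  have muj := HS j dj lj.
  rewrite (muXi_fin t0) lee_fin.
  case: (ltP t (e j)) => tej.
  + have disj : Xi m h tau 0 t `&` `]t, e j[%classic = set0.
      apply/seteqP; split => x // [[_ /andP[_ xt]]]; rewrite /= in_itv /= => /andP[tx _].
      by move: (lt_le_trans tx xt); rewrite ltxx.
    have sub : Xi m h tau 0 t `|` `]t, e j[%classic `<=` Xi m h tau 0 (e j).
      move=> x [Hx|]; first exact: (Xi_mono (ltW tej)).
      rewrite /= in_itv /= => /andP[tx xe]; split.
        exists j; split => //; right; rewrite /= xe andbT.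
        exact/ltW/(le_lt_trans hj tx).
      by rewrite /= (ltW xe) andbT; apply/ltW/(le_lt_trans t0 tx).
    have H := @measureU _ _ _ (@lebesgue_measure R) (Xi m h tau 0 t) `]t, e j[%classic (Xi_meas 0 t) (measurable_itv `]t, e j[) disj.
    have H2 : ((@lebesgue_measure R) (Xi m h tau 0 t `|` `]t, e j[%classic) <=
        muXi m h tau 0 (e j))%E.
      apply: le_measure; rewrite ?inE //; last exact: Xi_meas.
      by apply: measurableU; [exact: Xi_meas|exact: measurable_itv].
    rewrite /= in H; rewrite H mu_itv_oo // in H2.
    have H3 := le_trans H2 muj.
    rewrite -/(muXi m h tau 0 t) (muXi_fin t0) -EFinD lee_fin in H3.
    have P : 0 <= (1 - S) * (e j - t) by apply: mulr_ge0; lra.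
    nra.
  + have sub : Xi m h tau 0 t `<=` Xi m h tau 0 (e j).
      move=> x [[n [dn Hx]] /andP[x0 xt]]; split; first by exists n.
      rewrite /= x0 /=; have [hx xen] := Hset_le dn Hx.
      case: (leqP n j) => nj.
        by apply: le_trans xen (e_le dj _); rewrite nj (dom_ge1 dn).
      have ln : (ell <= n)%N by apply: leq_trans lj (ltnW nj).
      have := jmax n; rewrite dn ln (le_trans hx xt) /= => /(_ isT).
      by rewrite leqNgt nj.
    have H2 : (muXi m h tau 0 t <= muXi m h tau 0 (e j))%E.
      by apply: le_measure; rewrite ?inE //; exact: Xi_meas.
    have H3 := le_trans H2 muj.
    rewrite (muXi_fin t0) lee_fin in H3.
    have P : S * e j <= S * t by rewrite ler_wpM2l.
    lra.
- have sub : Xi m h tau 0 t `<=` `[0%R, C]%classic.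
    move=> x [[n [dn Hx]] /andP[x0 xt]]; rewrite /= in_itv /= x0 /=.
    have [hx xen] := Hset_le dn Hx.
    case: (ltnP n ell) => nl; last first.
      by exfalso; apply: nex; exists n; rewrite dn nl (le_trans hx xt).
    apply: le_trans xen _; apply: le_trans (ler_norm _) _.
    by rewrite /C (bigD1 (Ordinal nl)) //= lerDl sumr_ge0.
  have := @mu_le_itv _ 0 C (Xi_meas 0 t) sub C0; rewrite subr0 -/(muXi m h tau 0 t) (muXi_fin t0) !lee_fin.
  have P : 0 <= S * t by rewrite mulr_ge0.
  move=> H; lra.
Qed.

Lemma coverage G0 G1 : 0 <= G1 -> (forall n, dom n -> n%:R <= G0 + G1 * h n) ->
  forall t, 0 <= t ->
  (t%:E < endE m h tau 1)%E \/
  exists n, [/\ dom n, e n <= t & (t%:E < endE m h tau n.+1)%E].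
Proof.
move=> G10 HG t t0.
case: (boolP (t%:E < endE m h tau 1)%E) => [|H]; first by left.
right.
have [d1 e1t] : dom 1 /\ e 1%N <= t.
  move: H; rewrite /endE; case: ifP => d1; last by rewrite ltry.
  by rewrite lte_fin -leNgt.
have ex : exists n, dom n && (e n <= t) by exists 1%N; rewrite d1 e1t.
have ub : forall n, dom n && (e n <= t) -> (n <= Num.truncn (G0 + G1 * t))%N.
  move=> n /andP[dn ent].
  have Hi : n%:R <= G0 + G1 * t.
    apply: le_trans (HG _ dn) _; rewrite lerD2l ler_wpM2l //.
    exact: le_trans (h_le_e dn) ent.
  have x0 : 0 <= G0 + G1 * t := le_trans (ler0n _ _) Hi.
  by rewrite Num.Theory.truncn_ge_nat.
case: (ex_maxnP ex ub) => n /andP[dn ent] nmax.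
exists n; split => //.
rewrite /endE; case: ifP => dn1; last by rewrite ltry.
rewrite lte_fin ltNge; apply/negP => H1.
by have := nmax n.+1; rewrite dn1 H1 /= ltnn => /(_ isT).
Qed.

End Basic.

Lemma sup_bounds (R : realType) (A : set R) x M : A x -> (forall y, A y -> y <= M) ->
  x <= sup A /\ sup A <= M.
Proof.
move=> Ax HM; split.
  by apply: (ub_le_sup (E := A)) => //; exists M.
by apply: ge_sup; [exists x|].
Qed.

Lemma div_mono (R : realType) (a b c d : R) : 0 <= a <= b -> 0 < c <= d -> a / d <= b / c.
Proof.
move=> /andP[a0 ab] /andP[c0 cd].
have d0 : 0 < d := lt_le_trans c0 cd.
rewrite ler_pdivrMr //.
have hq : b / c * c = b by rewrite divfK // gt_eqF.
have q0 : 0 <= b / c by rewrite divr_ge0 // ?(le_trans a0 ab) ?ltW.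
apply: le_trans ab _; rewrite -{1}hq; exact: ler_wpM2l.
Qed.

Section Hats.
Context {R : realType} {m : option nat} {h tau : nat -> R} {ell : nat} {eps0 theta : R}.

Lemma Bdhat_bounds Sd t : 0 <= theta ->
  (forall i, (ell <= i)%N -> indom m i -> Bd_i m h tau i <= Sd) ->
  eps0 <= Bdhat m h tau ell eps0 theta t /\
  Bdhat m h tau ell eps0 theta t <= Num.max eps0 (theta * Sd + (1 - theta)).
Proof.
move=> th0 HS; apply: sup_bounds; first by left.
move=> y [-> | [i [li [di _]] <-]]; first by rewrite le_max lexx.
rewrite le_max; apply/orP; right; rewrite lerD2r ler_wpM2l //.
exact: HS.
Qed.

Lemma Bdhat_ge_elem Sd t i : 0 <= theta ->
  (forall i, (ell <= i)%N -> indom m i -> Bd_i m h tau i <= Sd) ->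
  (ell <= i)%N -> indom m i -> h i + tau i <= t ->
  theta * Bd_i m h tau i + (1 - theta) <= Bdhat m h tau ell eps0 theta t.
Proof.
move=> th0 HS li di et.
have := @sup_bounds _ ([set eps0] `|`
       [set theta * Bd_i m h tau i + (1 - theta) | i in
          [set i | (ell <= i)%N /\ indom m i /\ h i + tau i <= t]])
   (theta * Bd_i m h tau i + (1 - theta)) (Num.max eps0 (theta * Sd + (1 - theta))).
case.
- by right; exists i.
- move=> y [-> | [j [lj [dj _]] <-]]; first by rewrite le_max lexx.
  rewrite le_max; apply/orP; right; rewrite lerD2r ler_wpM2l //.
  exact: HS.
- by [].
Qed.

Lemma Bfhat_bounds F t : 0 < theta ->
  (forall i, (ell <= i)%N -> indom m i -> Bf_i h i <= F) ->
  eps0 <= Bfhat m h ell eps0 theta t /\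
  Bfhat m h ell eps0 theta t <= Num.max eps0 (F / theta).
Proof.
move=> th0 HF; apply: sup_bounds; first by left.
move=> y [-> | [i [li [di _]] <-]]; first by rewrite le_max lexx.
rewrite le_max; apply/orP; right; rewrite ler_pM2r ?invr_gt0 //.
exact: HF.
Qed.

Lemma Bfhat_ge_elem F t i : 0 < theta ->
  (forall i, (ell <= i)%N -> indom m i -> Bf_i h i <= F) ->
  (ell <= i)%N -> indom m i -> h i <= t ->
  Bf_i h i / theta <= Bfhat m h ell eps0 theta t.
Proof.
move=> th0 HF li di et.
have := @sup_bounds _ ([set eps0] `|`
       [set Bf_i h i / theta | i in
          [set i | (ell <= i)%N /\ indom m i /\ h i <= t]])
   (Bf_i h i / theta) (Num.max eps0 (F / theta)).
case.
- by right; exists i.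
- move=> y [-> | [j [lj [dj _]] <-]]; first by rewrite le_max lexx.
  rewrite le_max; apply/orP; right; rewrite ler_pM2r ?invr_gt0 //.
  exact: HF.
- by [].
Qed.

End Hats.

Theorem lemma4 (R : realType) (m : option nat) (h tau : nat -> R)
  (N : nat) (L : 'M[R]_N.+1) (lamN : R)
  (ell : nat) (eps0 theta gamma1 Delta0 : R) (t Delta : nat -> R) :
  DoS_seq m h tau -> ~ edge_case m h tau ->
  symmetric_mx L -> graph_laplacian L -> irreducible_mx L ->
  largest_eigenvalue L lamN ->
  (2 <= ell)%N -> 0 < eps0 < 1 -> 0 < theta < 1 ->
  0 < Delta0 -> `|1 - Delta0 * lamN| < 1 -> 1 < gamma1 ->
  t 1%N = 0 ->
  (forall k, (1 <= k)%N -> t k.+1 = t k + Delta k) ->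
  (forall k, (1 <= k)%N -> 0 <= t k -> ((t k)%:E < endE m h tau 1)%E ->
     Delta k = Delta0) ->
  (forall k n, (1 <= k)%N -> indom m n ->
     h n + tau n <= t k -> ((t k)%:E < endE m h tau n.+1)%E ->
     Delta k = Num.min Delta0
       ((1 - Bdhat m h tau ell eps0 theta (h n + tau n)) /
        (gamma1 * Bfhat m h ell eps0 theta (h n)))) ->
  exists (tcheck Dlow Dbar Bd Bf : R),
    0 <= tcheck /\
    durBound m h tau Bd /\ freqBound m h Bf /\
    (forall k, (1 <= k)%N -> 0 < Dlow <= Delta k) /\
    (forall k, (1 <= k)%N -> tcheck <= t k -> Delta k <= Dbar) /\
    `|1 - Dbar * lamN| < 1 /\
    Bd + Bf * Dbar < 1.
Proof.
move=> HD nedge _ _ _ _ ell2 /andP[e00 e01] /andP[th0 th1] D00 Hlam g1 t1 tS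
  Dcase1 Dcase2.
have lam0 : 0 < lamN.
  move: Hlam; rewrite ltr_norml => /andP[_ H].
  have : 0 < Delta0 * lamN by lra.
  by rewrite pmulr_rgt0.
have [nd nf] : inf (durBounds m h tau) <> 1 /\ ereal_inf (freqBounds m h) <> +oo%E.
  by split => H; apply: nedge; [left|right; left].
have [B1 [B10 [Lam [Lam0 HL]]]] : exists Bf, freqBound m h Bf.
  apply: contra_notP nf => nofb.
  rewrite (_ : freqBounds m h = [set +oo%E]) ?ereal_inf1 //.
  apply/seteqP; split => x /=.
    by case => [[Bf [_ fb]]|[-> _]] //; exfalso; apply: nofb; exists Bf.
  by move=> ->; right.
have HG : forall n, indom m n -> n%:R <= Lam%:R + B1 * h n.
  move=> n dn; have := le_trans (n_le_nxi HD n dn) (HL _ (h_ge0 HD dn)).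
  by rewrite lee_fin.
have cov := coverage HD _ _ B10 HG.
have [Sd [F [/andP[Sd0 Sd1] F0 HSF [dSd fF] [tc [Dbar [tc0 Hev Hbar HBB]]]]]] :
  exists Sd F : R, [/\ 0 <= Sd < 1, 0 <= F,
   (forall i, (ell <= i)%N -> indom m i -> Bd_i m h tau i <= Sd /\ Bf_i h i <= F),
   durBound m h tau Sd /\ freqBound m h F &
   exists tc Dbar, [/\ 0 <= tc, (forall k, (1 <= k)%N -> tc <= t k -> Delta k <= Dbar),
       `|1 - Dbar * lamN| < 1 & Sd + F * Dbar < 1]].
  case: (boolP (indom m ell)) => dell; last first.
    have nD : forall i, (ell <= i)%N -> indom m i -> False.
      move=> i li di; move/negP: dell; apply.
      by apply: (dom_le di); rewrite li (leq_trans _ ell2).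
    exists 0, 0; split => //.
    - by rewrite lexx ltr01.
    - by move=> i li di; case: (nD i li di).
    - split.
        apply: (dur_lemma HD ell 0 Lam%:R B1) => //; first by rewrite lexx ler01.
        by move=> i di li; case: (nD i li di).
      by apply: (freq_lemma HD ell) => // i di li; case: (nD i li di).
    exists 0, Delta0; split => //.
      move=> k k1 tk0; case: (cov _ tk0) => [H1|[n [dn ent tlt]]].
        by rewrite (Dcase1 k k1 tk0 H1).
      by rewrite (Dcase2 k n k1 dn ent tlt) ge_min lexx.
    by rewrite mul0r addr0 ltr01.
  have d2 : indom m 2 by apply: (dom_le dell); rewrite ell2.
  have d1 : indom m 1 by apply: (dom_le dell); rewrite (leq_trans _ ell2).
  set g := h 2%N - (h 1%N + tau 1%N).
  have g0 : 0 < g by rewrite subr_gt0; exact: (e_lt_h HD d2).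
  have [B0 [/andP[B00 _] [k0 [k00 Hk0]]] B0lt] : exists2 B0, durBound m h tau B0 & B0 < 1.
    have one : durBound m h tau 1.
      split; first by rewrite ler01 lexx.
      exists 1; split => // s s0; apply: le_trans (muXi_le s0) _.
      by rewrite lee_fin; lra.
    have lb : lbound (durBounds m h tau) 0.
      by move=> y [/andP[y0 _] _].
    have inf1 : inf (durBounds m h tau) <= 1.
      by apply: (ge_inf (E := durBounds m h tau)) => //; exists 0.
    have : inf (durBounds m h tau) < 1 by rewrite lt_neqAle inf1 andbT; apply/eqP.
    by move/(inf_lt (ex_intro _ 1 one)) => [y dy y1]; exists y.
  set c := (k0 + g * B0) / (k0 + g).
  have kg0 : 0 < k0 + g by lra.
  have c1 : c < 1.
    rewrite /c ltr_pdivrMr // mul1r.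
    have : g * B0 < g * 1 by rewrite ltr_pM2l.
    lra.
  have Hbd : forall i, (ell <= i)%N -> indom m i -> 0 <= Bd_i m h tau i <= c.
    move=> i li di.
    have i2 : (2 <= i)%N := leq_trans ell2 li.
    have E0 : 0 < h i + tau i := lt_le_trans (h_gt0 HD di i2) (h_le_e HD di).
    set x := fine (muXi m h tau 0 (h i + tau i)).
    have x0 : 0 <= x by apply: fine_ge0; exact: muXi_ge0.
    have hx1 : x <= k0 + B0 * (h i + tau i).
      by have := Hk0 _ (ltW E0); rewrite (muXi_fin (ltW E0)) lee_fin.
    have hx2 : x <= h i + tau i - g.
      by have := gap_lemma HD i di i2; rewrite (muXi_fin (ltW E0)) lee_fin.
    rewrite /Bd_i -/x; apply/andP; split; first by rewrite divr_ge0 // ltW.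
    rewrite ler_pdivrMr // /c mulrAC ler_pdivlMr //.
    have P1 : 0 <= k0 * (h i + tau i - g - x) by apply: mulr_ge0; lra.
    have P2 : 0 <= g * (k0 + B0 * (h i + tau i) - x) by apply: mulr_ge0; lra.
    nra.
  set Dset := [set i | (ell <= i)%N /\ indom m i].
  set Sd := sup [set Bd_i m h tau i | i in Dset].
  have HSd : forall i, (ell <= i)%N -> indom m i -> Bd_i m h tau i <= Sd /\ Sd <= c.
    move=> i li di; apply: sup_bounds; first by exists i.
    by move=> y [j [lj dj] <-]; case/andP: (Hbd j lj dj).
  have Sd0 : 0 <= Sd.
    by case/andP: (Hbd ell (leqnn _) dell) => H _; apply: le_trans H (HSd _ (leqnn _) dell).1.
  have Sd1 : Sd < 1 by apply: le_lt_trans (HSd _ (leqnn _) dell).2 c1.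
  have h20 : 0 < h 2%N by apply: (h_gt0 HD d2).
  set Fu := Lam%:R / h 2%N + B1.
  have HBf : forall i, (ell <= i)%N -> indom m i -> 0 < Bf_i h i <= Fu.
    move=> i li di.
    have i2 : (2 <= i)%N := leq_trans ell2 li.
    have hi0 : 0 < h i := h_gt0 HD di i2.
    rewrite /Bf_i divr_gt0 ?ltr0n ?(leq_trans _ i2) //=.
    rewrite ler_pdivrMr // mulrDl.
    have := HG i di.
    have : Lam%:R <= Lam%:R / h 2%N * h i.
      rewrite mulrAC ler_pdivlMr // ler_wpM2l //.
      by apply: (h_le HD di); rewrite i2.
    lra.
  set F := sup [set Bf_i h i | i in Dset].
  have HF : forall i, (ell <= i)%N -> indom m i -> Bf_i h i <= F /\ F <= Fu.
    move=> i li di; apply: sup_bounds; first by exists i.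
    by move=> y [j [lj dj] <-]; case/andP: (HBf j lj dj).
  have F0 : 0 < F.
    by case/andP: (HBf ell (leqnn _) dell) => H _; apply: lt_le_trans H (HF _ (leqnn _) dell).1.
  exists Sd, F; split.
  - by rewrite Sd0 Sd1.
  - exact: ltW.
  - by move=> i li di; split; [exact: (HSd i li di).1|exact: (HF i li di).1].
  - split.
      apply: (dur_lemma HD ell Sd Lam%:R B1) => //; first by rewrite Sd0 ltW.
      move=> i di li.
      have E0 : 0 < h i + tau i.
        exact: lt_le_trans (h_gt0 HD di (leq_trans ell2 li)) (h_le_e HD di).
      rewrite (muXi_fin (ltW E0)) lee_fin.
      by have := (HSd i li di).1; rewrite /Bd_i ler_pdivrMr // mulrC.
    apply: (freq_lemma HD ell) => [|i di li]; first exact: ltW.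
    have hi0 : 0 < h i := h_gt0 HD di (leq_trans ell2 li).
    by have := (HF i li di).1; rewrite /Bf_i ler_pdivrMr // mulrC.
  have HSd' : forall i, (ell <= i)%N -> indom m i -> Bd_i m h tau i <= Sd.
    by move=> i li di; case: (HSd i li di).
  have HF' : forall i, (ell <= i)%N -> indom m i -> Bf_i h i <= F.
    by move=> i li di; case: (HF i li di).
  have hsupD : has_sup [set Bd_i m h tau i | i in Dset].
    split; first by exists (Bd_i m h tau ell); exists ell.
    by exists 1 => y [j [lj dj] <-]; apply: le_trans (HSd' j lj dj) (ltW Sd1).
  have hsupF : has_sup [set Bf_i h i | i in Dset].
    split; first by exists (Bf_i h ell); exists ell.
    by exists F => y [j [lj dj] <-]; exact: HF' j lj dj.
  set q := (1 - theta) * (1 - Sd) / theta.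
  have q0 : 0 < q by rewrite /q divr_gt0 // mulr_gt0 //; lra.
  have [_ [i1 [li1 di1] <-] Hi1] := sup_adherent q0 hsupD.
  have q2 : 0 < (1 - theta) * F by rewrite mulr_gt0 //; lra.
  have [_ [i2 [li2 di2] <-] Hi2] := sup_adherent q2 hsupF.
  set I := maxn i1 i2.
  have dI : indom m I by rewrite /I /maxn; case: ifP.
  have eI0 : 0 <= h I + tau I := e_ge0 HD dI.
  have e1I : h 1%N + tau 1%N <= h I + tau I.
    by apply: (e_le HD dI); rewrite leqnn (dom_ge1 dI).
  set Dbar := Num.min Delta0 ((1 - Sd) / (gamma1 * F)).
  have gF0 : 0 < gamma1 * F by rewrite mulr_gt0 //; lra.
  have Dbar0 : 0 < Dbar by rewrite lt_min D00 divr_gt0 //; lra.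
  have DbarD : Dbar <= Delta0 by rewrite ge_min lexx.
  have DbarF : Dbar <= (1 - Sd) / (gamma1 * F) by rewrite ge_min lexx orbT.
  have Bdm1 : Num.max eps0 (theta * Sd + (1 - theta)) < 1.
    rewrite gt_max e01 /=.
    have : theta * Sd < theta * 1 by rewrite ltr_pM2l.
    lra.
  exists (h I + tau I), Dbar; split => //.
  - move=> k k1 tk.
    have tk0 : 0 <= t k := le_trans eI0 tk.
    case: (cov _ tk0) => [H1|[n [dn ent tlt]]].
      by exfalso; move: H1; rewrite /endE d1 lte_fin => H1; lra.
    have nI : (I <= n)%N.
      rewrite leqNgt; apply/negP => nI.
      have dn1 : indom m n.+1 by apply: (dom_le dI); rewrite nI.
      move: tlt; rewrite /endE dn1 lte_fin => tlt.
      have : h n.+1 + tau n.+1 <= h I + tau I by apply: (e_le HD dI); rewrite nI.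
      lra.
    have li1n : (i1 <= n)%N := leq_trans (leq_maxl _ _) nI.
    have li2n : (i2 <= n)%N := leq_trans (leq_maxr _ _) nI.
    rewrite (Dcase2 k n k1 dn ent tlt) /Dbar le_min ge_min lexx /=.
    rewrite ge_min; apply/orP; right.
    apply: div_mono.
      have [_ Hb] := @Bdhat_bounds R m h tau ell eps0 theta Sd (h n + tau n) (ltW th0) HSd'.
      have i1c : (1 <= i1 <= n)%N by rewrite li1n (dom_ge1 di1).
      have Hge := @Bdhat_ge_elem R m h tau ell eps0 theta Sd (h n + tau n) i1 (ltW th0) HSd' li1 di1 (e_le HD dn i1c).
      have hq : theta * q = (1 - theta) * (1 - Sd) by rewrite /q mulrC divfK // gt_eqF.
      have : theta * (Sd - q) < theta * Bd_i m h tau i1 by rewrite ltr_pM2l.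
      move=> H; apply/andP; split; lra.
    have i2c : (1 <= i2 <= n)%N by rewrite li2n (dom_ge1 di2).
    have Hge := @Bfhat_ge_elem R m h ell eps0 theta F (h n) i2 th0 HF' li2 di2 (h_le HD dn i2c).
    have Hi2x : F - (1 - theta) * F < Bf_i h i2 := Hi2.
    have : F < Bf_i h i2 / theta by rewrite ltr_pdivlMr //; lra.
    move=> H; apply/andP; split => //.
    rewrite ler_pM2l; lra.
  - rewrite ltr_norml.
    have : 0 < Dbar * lamN by rewrite mulr_gt0.
    have : Dbar * lamN <= Delta0 * lamN by rewrite ler_wpM2r // ltW.
    move: Hlam; rewrite ltr_norml => /andP[H1 H2] H3 H4.
    apply/andP; split; lra.
  - have H1 : F * Dbar <= F * ((1 - Sd) / (gamma1 * F)) by rewrite ler_wpM2l // ltW.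
    have E : F * ((1 - Sd) / (gamma1 * F)) = (1 - Sd) / gamma1.
      have g10 : gamma1 != 0 by rewrite gt_eqF //; lra.
      have F00 : F != 0 by rewrite gt_eqF.
      by field; rewrite g10 F00.
    rewrite E in H1.
    have : (1 - Sd) / gamma1 < 1 - Sd.
      rewrite ltr_pdivrMr; last lra.
      have : (1 - Sd) * 1 < (1 - Sd) * gamma1 by rewrite ltr_pM2l //; lra.
      lra.
    lra.
have HSd : forall i, (ell <= i)%N -> indom m i -> Bd_i m h tau i <= Sd.
  by move=> i li di; case: (HSF i li di).
have HF : forall i, (ell <= i)%N -> indom m i -> Bf_i h i <= F.
  by move=> i li di; case: (HSF i li di).
set Bdm := Num.max eps0 (theta * Sd + (1 - theta)).
set Fm := Num.max eps0 (F / theta).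
have Bdm1 : Bdm < 1.
  rewrite /Bdm gt_max e01 /=.
  have : theta * Sd < theta * 1 by rewrite ltr_pM2l.
  lra.
have Fm0 : 0 < Fm by rewrite /Fm lt_max e00.
set Dlow := Num.min Delta0 ((1 - Bdm) / (gamma1 * Fm)).
have Dlow0 : 0 < Dlow.
  rewrite /Dlow lt_min D00 /= divr_gt0 //; first lra.
  by rewrite mulr_gt0 //; lra.
have HDk : forall k, (1 <= k)%N -> 0 <= t k -> Dlow <= Delta k.
  move=> k k1 tk0; case: (cov _ tk0) => [H1|[n [dn ent tlt]]].
    by rewrite (Dcase1 k k1 tk0 H1) /Dlow ge_min lexx.
  rewrite (Dcase2 k n k1 dn ent tlt) le_min /Dlow !ge_min lexx /=.
  apply/orP; right; apply: div_mono.
    have [_ Hb] := @Bdhat_bounds R m h tau ell eps0 theta Sd (h n + tau n) (ltW th0) HSd.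
    apply/andP; split; first lra.
    rewrite lerD2l lerN2; exact: Hb.
  have [Hf1 Hf2] := @Bfhat_bounds R m h ell eps0 theta F (h n) th0 HF.
  apply/andP; split; first by rewrite mulr_gt0 //; lra.
  rewrite ler_pM2l //; lra.
have tpos : forall k, (1 <= k)%N -> 0 <= t k.
  elim => // k IH k1.
  case: (posnP k) => [k0|kp]; first by rewrite k0 t1.
  have tk0 := IH kp.
  rewrite tS //; have := HDk k kp tk0; lra.
exists tc, Dlow, Dbar, Sd, F; split => //; split => //; split => //; split => //.
move=> k k1; rewrite Dlow0 /=; exact: HDk k k1 (tpos k k1).
Qed.
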